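(* Let $\mathcal M$ be a map and let $e\neq f$ be edges of $\mathcal M$. If $\mathcal M\setminus e/ f$ is defined (i.e. $e$ is not a bridge of $\mathcal M$ and $f$ is not a separating loop of $\mathcal M\setminus e$), then $\mathcal M/ f\setminus e$ is defined (i.e. $f$ is not a separating loop of $\mathcal M$ and $e$ is not a bridge of $\mathcal M/f$) and $\mathcal M\setminus e/ f=\mathcal M/ f\setminus e$.
   Context: A map is a triple $\mathcal M=(B,\sigma,\alpha)$ with $B$ finite, $\sigma,\alpha\in\mathrm{Sym}(B)$, $\alpha$ a fixed-point-free involution, and $\langle\sigma,\alpha\rangle$ transitive on $B$; permutations compose as functions. Edges are the cycles of $\alpha$, vertices the cycles of $\sigma$. The underlying graph $G(\mathcal M)$ has vertices the cycles of $\sigma$ and edges the cycles of $\alpha$, $e$ incident to $v$ iff $e\cap v\neq\emptyset$. The dual map is $\mathcal M^\ast=(B,\sigma\alpha,\alpha)$. A bridge of $\mathcal M$ is an edge $e$ with $G(\mathcal M)-e$ disconnected; a separating loop is an edge $e$ with $G(\mathcal M^\ast)-e$ disconnected. For $\mu\in\mathrm{Sym}(B)$ and $B'\subseteq B$, $\mu_{|B'}\in\mathrm{Sym}(B')$ is defined by $\mu_{|B'}(b)=\mu^k(b)$, $k$ least positive with $\mu^k(b)\in B'$. For an edge $e$ that is not a bridge, deletion is $\mathcal M\setminus e=(B\setminus e,\sigma_{|B\setminus e},\alpha_{|B\setminus e})$; for an edge $e$ that is not a separating loop, contraction is $\mathcal M/e=(B\setminus e,(\sigma\alpha)_{|B\setminus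 e}\,\alpha_{|B\setminus e},\alpha_{|B\setminus e})$. *)

(* Defs.v *)
(* Darts live in a fixed finite type T; a cmap is a
   triple (B, sigma, alpha) with B : {set T}, and sigma, alpha finite
   functions that act as permutations of B and as the identity outside B. *)
From mathcomp Require Import all_boot.
Set Implicit Arguments. Unset Strict Implicit. Unset Printing Implicit Defensive.

Section Maps.
Variable T : finType.

Record cmap := Map { darts : {set T}; sig : {ffun T -> T}; alp : {ffun T -> T} }.

(* mu restricted to B': b |-> mu^k b, k least positive with mu^k b \in B';
   identity outside B'. (For mu a permutation of a superset of B', such a
   k exists and is <= #|T|.) *)
Definition first_return (mu : {ffun T -> T}) (B' : {set T}) (b : T) : nat :=
  (find (fun k => iter k.+1 mu b \in B') (iota 0 #|T|)).+1.

Definition restr (mu : {ffun T -> T}) (B' : {set T}) : {ffun T -> T} :=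
  [ffun b => if b \in B' then iter (first_return mu B' b) mu b else b].

Definition comp (f g : {ffun T -> T}) : {ffun T -> T} := [ffun b => f (g b)].

Definition perm_on_set (B : {set T}) (mu : {ffun T -> T}) : bool :=
  [forall x, (x \notin B) ==> (mu x == x)] &&
  [forall x in B, mu x \in B] &&
  [forall x in B, forall y in B, (mu x == mu y) ==> (x == y)].

Definition transitive_on (B : {set T}) (r : rel T) : bool :=
  [forall x in B, forall y in B, connect r x y].

Definition is_map (M : cmap) : bool :=
  [&& perm_on_set (darts M) (sig M), perm_on_set (darts M) (alp M),
      [forall x in darts M, (alp M x != x) && (alp M (alp M x) == x)] &
      transitive_on (darts M) (fun x y => (y == sig M x) || (y == alp M x))].

Definition is_edge (M : cmap) (e : {set T}) : Prop :=
  exists2 b, b \in darts M & e = [set b; alp M b].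

(* G(M) - e is connected: vertices (sigma-cycles) joined by the edges
   (alpha-cycles) other than e; expressed on darts: a dart is linked to
   sigma of it (same vertex) and to alpha of it through an edge <> e. *)
Definition graph_minus_connected (B : {set T}) (s a : {ffun T -> T})
    (e : {set T}) : bool :=
  transitive_on B (fun x y => (x \in B) &&
                    ((y == s x) || ((x \notin e) && (y == a x)))).

Definition dual (M : cmap) : cmap := Map (darts M) (comp (sig M) (alp M)) (alp M).

Definition is_bridge (M : cmap) (e : {set T}) : bool :=
  ~~ graph_minus_connected (darts M) (sig M) (alp M) e.

Definition is_sep_loop (M : cmap) (e : {set T}) : bool := is_bridge (dual M) e.

Definition delete (M : cmap) (e : {set T}) : cmap :=
  let B' := darts M :\: e in Map B' (restr (sig M) B') (restr (alp M) B').

Definition contract (M : cmap) (e : {set T}) : cmap :=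
  let B' := darts M :\: e in
  Map B' (comp (restr (comp (sig M) (alp M)) B') (restr (alp M) B'))
         (restr (alp M) B').

End Maps.

(* Main.v *)
Require Import Defs.
From mathcomp Require Import all_boot.
From Stdlib Require Import Lia.
Set Implicit Arguments. Unset Strict Implicit. Unset Printing Implicit Defensive.


Ltac tolia :=
  unfold addn, subn, muln in *;
  repeat match goal with
  | H : is_true (_ && _) |- _ => let H1 := fresh "H" in let H2 := fresh "H" in case/andP: H => H1 H2
  | H : is_true (_ <= _) |- _ => move/leP: H => H
  end;
  repeat (apply/andP; split);
  try apply/leP; lia.

Lemma fr_spec (T : finType) (mu : {ffun T -> T}) (A : {set T}) b j :
  0 < j <= #|T| -> iter j mu b \in A ->
  [/\ 0 < first_return mu A b <= #|T|, iter (first_return mu A b) mu b \in A &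
      forall i, 0 < i < first_return mu A b -> iter i mu b \notin A].
Proof.
move=> /andP[j0 jT] hj.
pose p := fun k => iter k.+1 mu b \in A.
have hp : has p (iota 0 #|T|).
  apply/hasP; exists j.-1; first by rewrite mem_iota; tolia.
  by rewrite /p prednK.
have hf : find p (iota 0 #|T|) < #|T| by rewrite -[X in _ < X](size_iota 0) -has_find.
rewrite /first_return -/p; split.
- tolia.
- by have := nth_find 0 hp; rewrite nth_iota.
- move=> i /andP[i0 ilt]; have := @before_find _ 0 p (iota 0 #|T|) i.-1.
  rewrite nth_iota; last tolia.
  rewrite /p prednK //= => -> //; tolia.
Qed.

Lemma fr_eq (T : finType) (mu : {ffun T -> T}) (A : {set T}) b k :
  0 < k <= #|T| -> iter k mu b \in A -> (forall i, 0 < i < k -> iter i mu b \notin A) ->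
  first_return mu A b = k.
Proof.
move=> hk hA hi; have [h1 h2 h3] := fr_spec hk hA.
have [lt|gt|//] := ltngtP (first_return mu A b) k.
- by have := hi _ (introT andP (conj (proj1 (andP h1)) lt)); rewrite h2.
- have : 0 < k < first_return mu A b by rewrite gt; case/andP: hk => ->.
  by move/h3; rewrite hA.
Qed.

Lemma iter_agree (T : Type) (g h : T -> T) a b k :
  g a = h b -> (forall i, 0 < i < k -> g (iter i h b) = h (iter i h b)) ->
  forall i, 0 < i <= k -> iter i g a = iter i h b.
Proof.
move=> hab hgh; elim=> // [[|i]] IH hi; first by rewrite /= hab.
rewrite iterS IH; last tolia.
by rewrite hgh //; tolia.
Qed.

Lemma restr_shift (T : finType) (g h : {ffun T -> T}) (A : {set T}) a b j :
  0 < j <= #|T| -> iter j h b \in A ->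
  g a = h b -> (forall z, z \notin A -> g z = h z) ->
  iter (first_return g A a) g a = iter (first_return h A b) h b /\
  0 < first_return h A b <= #|T|.
Proof.
move=> hj hA hab hgh; have [h1 h2 h3] := fr_spec hj hA.
have ag := iter_agree hab (fun i hi => hgh _ (h3 i hi)).
have E : iter (first_return h A b) g a = iter (first_return h A b) h b.
  by apply: ag; rewrite leqnn andbT; case/andP: h1.
rewrite (@fr_eq _ g A a (first_return h A b)) //.
- by rewrite E.
- move=> i hi; rewrite ag ?h3 //; tolia.
Qed.

Lemma restr_out (T : finType) (mu : {ffun T -> T}) (A : {set T}) z :
  z \notin A -> restr mu A z = z.
Proof. by rewrite /restr ffunE => /negbTE ->. Qed.

Lemma restr_in (T : finType) (mu : {ffun T -> T}) (A : {set T}) z :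
  z \in A -> restr mu A z = iter (first_return mu A z) mu z.
Proof. by rewrite /restr ffunE => ->. Qed.

Lemma card_gt0_T (T : finType) (z : T) : 0 < #|T|.
Proof. by apply/card_gt0P; exists z. Qed.

Lemma restr_in1 (T : finType) (mu : {ffun T -> T}) (A : {set T}) z :
  z \in A -> mu z \in A -> restr mu A z = mu z.
Proof.
move=> zA mA; rewrite restr_in // (@fr_eq _ _ _ _ 1) //.
- by rewrite card_gt0_T.
- by case=> [|[|i]].
Qed.

Lemma iter_mul_order (T : finType) (mu : T -> T) (inj : injective mu) x q :
  iter (q * order mu x) mu x = x.
Proof. by elim: q => // q IH; rewrite mulSn iterD IH (iter_order inj). Qed.

Lemma iter_mod (T : finType) (mu : T -> T) (inj : injective mu) x n :
  iter n mu x = iter (n %% order mu x) mu x.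
Proof. by rewrite {1}(divn_eq n (order mu x)) addnC iterD iter_mul_order. Qed.

Lemma order_le (T : finType) (mu : T -> T) x : order mu x <= #|T|.
Proof. exact: max_card. Qed.


Lemma exists_return (T : finType) (mu : {ffun T -> T}) (A : {set T}) b :
  injective mu -> b \in A -> exists j, 0 < j <= #|T| /\ iter j mu b \in A.
Proof.
move=> inj bA; exists (order mu b); rewrite order_gt0 order_le (iter_order inj); split => //.
Qed.

Lemma restr_compress (T : finType) (mu : {ffun T -> T}) (A A' : {set T}) x :
  A' \subset A -> x \in A' -> (exists j, 0 < j <= #|T| /\ iter j mu x \in A') ->
  [/\ exists2 K, 0 < K <= #|T| & iter K (restr mu A) x \in A',
      restr mu A' x \in A' & restr (restr mu A) A' x = restr mu A' x].
Proof.
move=> sA xA' [j [hj hjA]].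
have [m1 m2 m3] := fr_spec hj hjA.
pose nu := restr mu A.
have Q : forall p, p <= #|T| -> forall z, z \in A -> 0 < p -> iter p mu z \in A' ->
   (forall i, 0 < i < p -> iter i mu z \notin A') ->
   exists K, [/\ 0 < K <= p, iter K nu z = iter p mu z &
                 forall i, 0 < i < K -> iter i nu z \notin A'].
  elim/ltn_ind => p IH pT z zA p0 pA' hi.
  have pA : iter p mu z \in A by apply: (subsetP sA).
  have hpp : 0 < p <= #|T| by rewrite p0.
  have [k1 k2 k3] := fr_spec hpp pA.
  set k := first_return mu A z in k1 k2 k3.
  have nuz : nu z = iter k mu z by rewrite /nu restr_in.
  have kp : k <= p.
    rewrite leqNgt; apply/negP => pk.
    by have := k3 p; rewrite p0 pk pA => /(_ isT).
  case: (ltngtP k p) kp => // [kp _ | kp _].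
  - have z'A' : iter k mu z \notin A' by apply: hi; rewrite kp; case/andP: k1 => ->.
    have [K [K1 K2 K3]] := IH (p - k) ltac:(tolia) ltac:(tolia) (iter k mu z) k2 ltac:(tolia)
       ltac:(by rewrite -iterD subnK // ltnW)
       ltac:(move=> i hi'; rewrite -iterD; apply: hi; tolia).
    exists K.+1; split.
    + tolia.
    + by rewrite iterSr nuz K2 -iterD subnK // ltnW.
    + move=> [|[|i]] // hi'; first by rewrite /= -/nu nuz.
      rewrite iterSr nuz; apply: K3; tolia.
  - exists 1; split; [tolia | | by case=> [|[|i]]].
    by rewrite /= -/nu nuz kp.
have [K [K1 K2 K3]] := Q _ (proj2 (andP m1)) x (subsetP sA _ xA') (proj1 (andP m1)) m2 m3.
have KT : 0 < K <= #|T| by tolia.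
have yA : restr mu A' x \in A' by rewrite restr_in.
split => //.
- by exists K => //; rewrite K2.
- by rewrite restr_in // (@fr_eq _ _ _ _ K) // ?K2 // -restr_in.
Qed.

Lemma connect_iter (T : finType) (r : rel T) (W : T -> T) z n :
  (forall i, i < n -> r (iter i W z) (iter i.+1 W z)) -> connect r z (iter n W z).
Proof.
elim: n => [|n IH] h; first exact: connect0.
apply: (@connect_trans _ _ (iter n W z)).
  by apply: IH => i hi; apply: h; tolia.
by apply/connect1/h.
Qed.

Lemma closed_connect' (T : finType) (r : rel T) (P : T -> Prop) :
  (forall u v, r u v -> P u -> P v) -> forall x y, connect r x y -> P x -> P y.
Proof.
move=> hP x y /connectP[p hp ->]; elim: p x hp => //= v p IH x /andP[hxv hp] Px.
exact: IH hp (hP _ _ hxv Px).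
Qed.

Lemma proj_connect (T : finType) (r r' : rel T) (p : T -> T) :
  (forall u v, r u v -> connect r' (p u) (p v)) ->
  forall x y, connect r x y -> connect r' (p x) (p y).
Proof.
move=> hP x y /connectP[s hs ->]; elim: s x hs => /= [x _|v s IH x /andP[hxv hs]].
  exact: connect0.
exact: (connect_trans (hP _ _ hxv) (IH _ hs)).
Qed.

Lemma transP (T : finType) (B : {set T}) (r : rel T) :
  reflect (forall x y, x \in B -> y \in B -> connect r x y) (transitive_on B r).
Proof.
apply: (iffP idP).
- by move=> /forall_inP h x y xB yB; have /forall_inP := h x xB; apply.
- by move=> h; apply/forall_inP => x xB; apply/forall_inP => y yB; apply: h.
Qed.

Lemma pos_out (T : finType) (B : {set T}) (mu : {ffun T -> T}) z :
  perm_on_set B mu -> z \notin B -> mu z = z.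
Proof. by case/andP => /andP[/forallP h _ _] zB; have := h z; rewrite zB => /eqP. Qed.

Lemma pos_in (T : finType) (B : {set T}) (mu : {ffun T -> T}) z :
  perm_on_set B mu -> (mu z \in B) = (z \in B).
Proof.
move=> hp; case zB: (z \in B); last by rewrite (pos_out hp) ?zB.
by case/andP: hp => /andP[_ /forall_inP h] _; apply: h.
Qed.

Lemma pos_inj (T : finType) (B : {set T}) (mu : {ffun T -> T}) :
  perm_on_set B mu -> injective mu.
Proof.
move=> hp x y.
case xB: (x \in B); case yB: (y \in B).
- case/andP: hp => _ /forall_inP h /eqP; have /forall_inP := h x xB.
  by move=> /(_ y yB) /implyP hh /hh /eqP.
- by move=> E; have := pos_in x hp; rewrite E (pos_out hp) ?yB // xB.
- by move=> E; have := pos_in y hp; rewrite -E (pos_out hp) ?xB // yB.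
- by rewrite (pos_out hp) ?xB // (pos_out hp) ?yB.
Qed.

Lemma iter_pos_in (T : finType) (B : {set T}) (mu : {ffun T -> T}) n z :
  perm_on_set B mu -> (iter n mu z \in B) = (z \in B).
Proof. by move=> hp; elim: n => //= n IH; rewrite (pos_in _ hp). Qed.

Lemma edge_props (T : finType) (B : {set T}) (a : {ffun T -> T}) (e : {set T}) :
  perm_on_set B a -> (forall z, a (a z) = z) -> (exists2 b, b \in B & e = [set b; a b]) ->
  [/\ forall z, z \in e -> z \in B, forall z, (a z \in e) = (z \in e) &
      forall z, z \in e -> e = [set z; a z]].
Proof.
move=> hp aK [b bB ->]; split.
- by move=> z; rewrite !inE => /orP[] /eqP ->; rewrite ?(pos_in _ hp).
- move=> z; rewrite !inE orbC; congr (_ || _).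
  + by rewrite (inj_eq (can_inj aK)).
  + by rewrite -{1}(aK b) (inj_eq (can_inj aK)).
- move=> z; rewrite !inE => /orP[] /eqP ->; first by [].
  by rewrite aK setUC.
Qed.

Theorem lemma6 (T : finType) (M : cmap T) (e f : {set T}) :
  is_map M -> is_edge M e -> is_edge M f -> e != f ->
  ~~ is_bridge M e -> ~~ is_sep_loop (delete M e) f ->
  [/\ ~~ is_sep_loop M f, is_edge (contract M f) e,
      ~~ is_bridge (contract M f) e &
      contract (delete M e) f = delete (contract M f) e].
Proof.
case: M => B s a; rewrite /is_map /is_edge /is_sep_loop /is_bridge /contract /delete /dual /=.
move=> /and4P[hs ha hinv htr] he hf nef; rewrite !negbK => hbr hsl.
rewrite /graph_minus_connected in hbr hsl *.
move/transP: hbr => hbr; move/transP: hsl => hsl; move/transP: htr => htr.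
have aK : forall z, a (a z) = z.
  move=> z; case zB: (z \in B).
    by have /forall_inP := hinv => /(_ z zB) /andP[_ /eqP].
  by rewrite !(pos_out ha) ?zB.
have [eB ea eE] := edge_props ha aK he.
have [fB fa fE] := edge_props ha aK hf.
have dj : forall z, z \in e -> z \notin f.
  move=> z ze; apply/negP => zf; move/negP: nef; apply.
  by rewrite (eE z ze) (fE z zf).
have djf : forall z, z \in f -> z \notin e by move=> z zf; apply: contraL zf; apply: dj.
have sinj := pos_inj hs; have ainj := pos_inj ha.
have aBe : forall z, (a z \in B :\: e) = (z \in B :\: e) by move=> z; rewrite !inE ea (pos_in _ ha).
have aBf : forall z, (a z \in B :\: f) = (z \in B :\: f) by move=> z; rewrite !inE fa (pos_in _ ha).
pose af : {ffun T -> T} := [ffun z => if z \in f then a z else z].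
pose W := Defs.comp s af.
have Wnf : forall z, z \notin f -> W z = s z.
  by move=> z zf; rewrite /W /Defs.comp !ffunE (negbTE zf).
have Wf : forall z, z \in f -> W z = s (a z).
  by move=> z zf; rewrite /W /Defs.comp !ffunE zf.
have afK : cancel af af.
  by move=> z; rewrite !ffunE; case zf: (z \in f); rewrite ?fa ?zf ?aK.
have Winj : injective W.
  have WE : forall z, W z = s (af z) by move=> z; rewrite /W /Defs.comp ffunE.
  by move=> x y; rewrite !WE => /sinj h; exact: (can_inj afK h).
have WB : forall z, (W z \in B) = (z \in B).
  move=> z; case zf: (z \in f); first by rewrite Wf // (pos_in _ hs) (pos_in _ ha).
  by rewrite Wnf ?zf // (pos_in _ hs).
have iWB : forall n z, (iter n W z \in B) = (z \in B).
  by move=> n z; elim: n => //= n IH; rewrite WB.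
pose Rs : rel T := fun x y => (x \in B) && ((y == Defs.comp s a x) || ((x \notin f) && (y == a x))).
have RsA : forall z, z \in B -> z \notin f -> Rs z (a z).
  by move=> z zB zf; rewrite /Rs zB zf eqxx orbT.
have RsS : forall z, z \in B -> Rs z (s (a z)).
  by move=> z zB; rewrite /Rs zB /Defs.comp ?ffunE eqxx.
have RsS' : forall z, z \in B -> Rs (a z) (s z).
  by move=> z zB; have := RsS (a z); rewrite aK (pos_in _ ha); apply.
have hA : forall x y, x \in B :\: e -> y \in B :\: e -> connect Rs x y.
  move=> x y xe ye; have := hsl x y xe ye.
  apply: connect_sub => u v /andP[ue /orP[/eqP -> | /andP[uf /eqP ->]]]; last first.
    rewrite restr_in1 ?aBe //; apply: connect1; apply: RsA => //.
    by move: ue; rewrite inE => /andP[].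
  have uB : u \in B by move: ue; rewrite inE => /andP[].
  have aue : a u \in B :\: e by rewrite aBe.
  rewrite ffunE.
  have -> : restr a (B :\: e) u = a u by rewrite restr_in1 ?aBe.
  rewrite restr_in //.
  have [j [hj hjA]] := exists_return sinj aue.
  have [k1 k2 k3] := fr_spec hj hjA.
  set k := first_return s (B :\: e) (a u) in k1 k2 k3 *.
  suff H : forall i, 0 < i <= k -> connect Rs u (iter i s (a u)).
    by apply: H; rewrite leqnn andbT; case/andP: k1.
  elim=> [//|[|i] IH hi]; first by apply/connect1/RsS.
  apply: (connect_trans (IH _)); first by tolia.
  set w := iter i.+1 s (a u).
  have wB : w \in B by rewrite /w (iter_pos_in _ _ hs) (pos_in _ ha).
  have we : w \in e.
    have := k3 i.+1 ltac:(tolia); rewrite -/w inE wB andbT; exact: negbNE.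
  rewrite iterS -/w.
  apply: (connect_trans (connect1 (RsA w wB (dj w we)))).
  exact/connect1/RsS'.
have P1 : forall x y, x \in B -> y \in B -> connect Rs x y.
  move=> x y xB yB; have := htr x y xB yB.
  apply: connect_sub => u v /orP[] /eqP ->.
  - case uB: (u \in B); last by rewrite (pos_out hs) ?uB //; apply: connect0.
    case uf: (u \in f).
      have ue : u \in B :\: e by rewrite inE djf.
      apply: (connect_trans (hA u (a u) ue _)); first by rewrite aBe.
      exact/connect1/RsS'.
    apply: (connect_trans (connect1 (RsA u uB _))); first by rewrite uf.
    exact/connect1/RsS'.
  - case uB: (u \in B); last by rewrite (pos_out ha) ?uB //; apply: connect0.
    case uf: (u \in f).
      have ue : u \in B :\: e by rewrite inE djf.
      by apply: hA; rewrite ?aBe.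
    by apply/connect1/RsA; rewrite ?uf.
have P1g : transitive_on B Rs by apply/transP.
have psiE : Defs.comp (restr (Defs.comp s a) (B :\: f)) (restr a (B :\: f)) = restr W (B :\: f).
  apply/ffunP => z; rewrite ffunE.
  case zB': (z \in B :\: f); last by rewrite !restr_out ?zB'.
  rewrite (restr_in1 zB') ?aBf // restr_in ?aBf // restr_in //.
  have [j [hj hjA]] := exists_return Winj zB'.
  apply: (restr_shift hj hjA _ _).1.
    rewrite ffunE aK Wnf //; by move: zB'; rewrite inE => /andP[].
  move=> u; rewrite ffunE inE negb_and negbK => /orP[uf|uB]; first by rewrite Wf.
  have uf : u \notin f by apply: contra uB; apply: fB.
  by rewrite (pos_out ha uB) Wnf.
rewrite psiE.
have hsW : forall u v, u \in B :\: e -> v \in B :\: e -> s u = W v ->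
    restr s (B :\: e) u = restr W (B :\: e) v.
  move=> u v ue ve h; rewrite !restr_in //.
  have [j' [hj' hjA']] := exists_return Winj ve.
  apply: (restr_shift hj' hjA' h _).1 => z zBe.
  have zf : z \notin f by apply: contra zBe => zf; rewrite inE djf // fB.
  by rewrite Wnf.
split.
- exact: P1g.
- case: he => b bB eE'.
  have be : b \in e by rewrite eE' set21.
  have bBf : b \in B :\: f by rewrite inE dj // bB.
  exists b => //; rewrite (@restr_in1 _ a (B :\: f) b) // ?aBf //.
- pose RW : rel T := fun x y => (x \in B) && ((y == W x) || [&& x \notin e, x \notin f & y == a x]).
  have RWW : forall z, z \in B -> RW z (W z) by move=> z zB; rewrite /RW zB eqxx.
  have RWa : forall z, z \in B -> z \notin e -> z \notin f -> RW z (a z).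
    by move=> z zB ze zf; rewrite /RW zB ze zf eqxx orbT.
  have cW : forall z n, z \in B -> connect RW z (iter n W z).
    by move=> z n zB; apply: connect_iter => i _; apply: RWW; rewrite iWB.
  have hI : forall x y, x \in B :\: e -> y \in B :\: e -> connect RW x y.
    move=> x y xe ye; have := hsl x y xe ye.
    apply: connect_sub => u v /andP[ue /orP[/eqP -> | /andP[uf /eqP ->]]]; last first.
      have [ue' uB] : u \notin e /\ u \in B by move: ue; rewrite inE => /andP[].
      by rewrite restr_in1 ?aBe //; apply/connect1/RWa.
    have [ue' uB] : u \notin e /\ u \in B by move: ue; rewrite inE => /andP[].
    have aue : a u \in B :\: e by rewrite aBe.
    rewrite ffunE.
    have -> : restr a (B :\: e) u = a u by rewrite restr_in1 ?aBe.
    rewrite restr_in //.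
    have [j [hj hjA]] := exists_return sinj aue.
    have [k1 k2 k3] := fr_spec hj hjA.
    set k := first_return s (B :\: e) (a u) in k1 k2 k3 *.
    pose st := if u \in f then u else a u.
    have stB : st \in B by rewrite /st; case: ifP => _; rewrite ?(pos_in _ ha).
    have c1 : connect RW u st.
      rewrite /st; case: ifP => uf; first exact: connect0.
      by apply/connect1/RWa; rewrite ?uf.
    have Wst : W st = s (a u).
      rewrite /st; case: ifP => uf; first by rewrite Wf.
      by rewrite Wnf // fa uf.
    have hmid : forall i, 0 < i < k -> W (iter i s (a u)) = s (iter i s (a u)).
      move=> i hi; apply: Wnf; apply: dj; have := k3 i hi.
      rewrite inE (iter_pos_in _ _ hs) (pos_in _ ha) uB andbT; exact: negbNE.
    have ag := iter_agree Wst hmid.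
    rewrite -(ag k); last by rewrite leqnn andbT; case/andP: k1.
    by apply: (connect_trans c1); apply: cW.
  pose Re : rel T := fun x y => (x \in B) && ((y == s x) || (x \notin e) && (y == a x)).
  have hII : forall z, z \in e -> exists w, [/\ w \in B :\: e, connect RW z w & connect RW w z].
    move=> z ze; have zB := eB z ze.
    have ex : exists j, 0 < j <= #|T| /\ iter j s z \in B :\: e.
      case: (boolP [exists j : 'I_#|T|.+1, (0 < j) && (iter j s z \in B :\: e)]).
        case/existsP => j /andP[j0 jA]; exists j; split => //.
        by rewrite j0 -ltnS; exact: ltn_ord.
      move=> hno; exfalso.
      have hall : forall n, iter n s z \in e.
        move=> n; rewrite (iter_mod sinj).
        set m := n %% order s z.
        have mo : m < order s z by rewrite /m ltn_mod order_gt0.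
        case m0: (m == 0); first by rewrite (eqP m0).
        have mT : m < #|T|.+1 by rewrite ltnS; apply: leq_trans (ltnW mo) (order_le _ _).
        have : iter m s z \notin B :\: e.
          apply: contra hno => hm; apply/existsP; exists (Ordinal mT).
          by rewrite /= lt0n m0 hm.
        by rewrite inE (iter_pos_in _ _ hs) zB andbT => /negbNE.
      case: hf => c cB fE'.
      have cf : c \in f by rewrite fE' set21.
      have step : forall u v, Re u v -> (forall n, iter n s u \in e) -> forall n, iter n s v \in e.
        move=> u v /andP[_ /orP[/eqP -> | /andP[ue _]]] Pu n; first by rewrite -iterSr.
        by have := Pu 0; rewrite /= (negbTE ue).
      have := @closed_connect' _ Re (fun u => forall n, iter n s u \in e) step z c (hbr z c zB cB) hall 0.
      by rewrite /= (negbTE (djf c cf)).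
    have [j [hj hjA]] := ex; have [k1 k2 k3] := fr_spec hj hjA.
    set k := first_return s (B :\: e) z in k1 k2 k3.
    have hmid : forall i, 0 < i < k -> W (iter i s z) = s (iter i s z).
      move=> i hi; apply: Wnf; apply: dj; have := k3 i hi.
      rewrite inE (iter_pos_in _ _ hs) zB andbT; exact: negbNE.
    have ag := iter_agree (Wnf z (dj z ze)) hmid.
    have Ek : iter k W z = iter k s z by apply: ag; rewrite leqnn andbT; case/andP: k1.
    exists (iter k s z); split => //.
      by rewrite -Ek; apply: cW.
    rewrite -Ek.
    have E : iter (k * order W z - k) W (iter k W z) = z.
      rewrite -iterD subnK; first exact: iter_mul_order.
      by apply: leq_pmulr; apply: order_gt0.
    by rewrite -{2}E; apply: cW; rewrite iWB.
  have hRW : forall x y, x \in B -> y \in B -> connect RW x y.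
    have lift : forall x, x \in B -> exists x', [/\ x' \in B :\: e, connect RW x x' & connect RW x' x].
      move=> x xB; case xe: (x \in e); first exact: hII.
      by exists x; split; [rewrite inE xe | exact: connect0 | exact: connect0].
    move=> x y xB yB; have [x' [x'e c1 _]] := lift x xB; have [y' [y'e _ c2]] := lift y yB.
    apply: (connect_trans c1); exact: (connect_trans (hI _ _ x'e y'e) c2).
  have FL : forall c, c \in f -> exists j, 0 < j <= #|T| /\ iter j W c \in B :\: f.
    move=> c cf; have cB := fB c cf.
    case: (boolP [exists j : 'I_#|T|.+1, (0 < j) && (iter j W c \in B :\: f)]).
      case/existsP => j /andP[j0 jA]; exists j; split => //.
      by rewrite j0 -ltnS; exact: ltn_ord.
    move=> hno; exfalso.
    have hall : forall n, iter n W c \in f.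
      move=> n; rewrite (iter_mod Winj).
      set m := n %% order W c.
      have mo : m < order W c by rewrite /m ltn_mod order_gt0.
      case m0: (m == 0); first by rewrite (eqP m0).
      have mT : m < #|T|.+1 by rewrite ltnS; apply: leq_trans (ltnW mo) (order_le _ _).
      have : iter m W c \notin B :\: f.
        apply: contra hno => hm; apply/existsP; exists (Ordinal mT).
        by rewrite /= lt0n m0 hm.
      by rewrite inE iWB cB andbT => /negbNE.
    have hrho : forall n, iter n (Defs.comp s a) c = iter n W c.
      elim=> //= n IH; rewrite IH ffunE Wf //; exact: hall.
    have step : forall u v, Rs u v -> (forall n, iter n (Defs.comp s a) u \in f) ->
        forall n, iter n (Defs.comp s a) v \in f.
      move=> u v /andP[_ /orP[/eqP -> | /andP[uf _]]] Pu n; first by rewrite -iterSr.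
      by have := Pu 0; rewrite /= (negbTE uf).
    case: he => b bB eE'.
    have be : b \in e by rewrite eE' set21.
    have := @closed_connect' _ Rs (fun u => forall n, iter n (Defs.comp s a) u \in f) step c b
      (P1 c b cB bB) (fun n => ltac:(rewrite hrho; exact: hall)) 0.
    by rewrite /= (negbTE (dj b be)).
  have EX : forall z, z \in B -> exists j, 0 < j <= #|T| /\ iter j W z \in B :\: f.
    move=> z zB; case zf: (z \in f); first exact: FL.
    by apply: exists_return Winj _; rewrite inE zf zB.
  pose p z := if z \in f then iter (first_return W (B :\: f) z) W z else z.
  have PW : forall u, u \in B -> iter (first_return W (B :\: f) u) W u = p (W u).
    move=> u uB; have [j [hj hjA]] := EX u uB; have [k1 k2 k3] := fr_spec hj hjA.
    have WuB : W u \in B by rewrite WB.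
    rewrite /p; case Wuf: (W u \in f).
      have k1' : 1 < first_return W (B :\: f) u.
        case/andP: k1 => k0 kT; rewrite ltn_neqAle k0 andbT; apply/eqP => k1e.
        by move: k2; rewrite -k1e /= inE Wuf.
      have E : first_return W (B :\: f) (W u) = (first_return W (B :\: f) u).-1.
        apply: fr_eq.
        - case/andP: k1 => _ kT; apply/andP; split; first by rewrite -ltnS prednK // ltnW.
          by apply: leq_trans kT; apply: leq_pred.
        - by rewrite -iterSr prednK // ltnW.
        - move=> i /andP[i0 hi]; rewrite -iterSr; apply: k3.
          by apply/andP; split => //; rewrite -(ltn_predK k1') ltnS.
      by rewrite E -iterSr prednK // ltnW.
    have E : first_return W (B :\: f) u = 1.
      apply: fr_eq.
      - by rewrite card_gt0_T.
      - by rewrite /= inE Wuf WuB.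
      - by case=> [|[|]].
    by rewrite E.
  apply/transP => x y xBf yBf.
  have [xnf xB] : x \notin f /\ x \in B by move: xBf; rewrite inE => /andP[].
  have [ynf yB] : y \notin f /\ y \in B by move: yBf; rewrite inE => /andP[].
  have px : p x = x by rewrite /p (negbTE xnf).
  have py : p y = y by rewrite /p (negbTE ynf).
  rewrite -{1}px -py.
  apply: (proj_connect _ (hRW x y xB yB)).
  move=> u v /andP[uB /orP[/eqP -> | /and3P[ue uf /eqP ->]]].
  - case uf: (u \in f).
      by rewrite {1}/p uf PW //; apply: connect0.
    have pu : p u = u by rewrite /p uf.
    rewrite pu; apply: connect1.
    have uBf : u \in B :\: f by rewrite inE uf uB.
    by rewrite /= uBf /= restr_in // PW // eqxx.
  - have pu : p u = u by rewrite /p (negbTE uf).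
    have pau : p (a u) = a u by rewrite /p fa (negbTE uf).
    rewrite pu pau; apply: connect1.
    have uBf : u \in B :\: f by rewrite inE uf uB.
    by rewrite /= uBf /= ue (@restr_in1 _ a (B :\: f) u) ?aBf // eqxx orbT.
- have BB : B :\: f :\: e = B :\: e :\: f by rewrite !setDDl setUC.
  rewrite BB; set B2 := B :\: e :\: f.
  have inB2 : forall z, (z \in B2) = [&& z \notin f, z \notin e & z \in B].
    by move=> z; rewrite !inE.
  have aB2 : forall z, (a z \in B2) = (z \in B2).
    by move=> z; rewrite !inB2 ea fa (pos_in _ ha).
  have alpeq : forall A : {set T}, B2 \subset A -> (forall z, (a z \in A) = (z \in A)) ->
      restr (restr a A) B2 = [ffun z => if z \in B2 then a z else z].
    move=> A sA hA'; apply/ffunP => z; rewrite ffunE.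
    case zB: (z \in B2); last by rewrite restr_out ?zB.
    have zA := subsetP sA z zB.
    have E1 : restr a A z = a z by rewrite (restr_in1 zA) ?hA'.
    by rewrite (restr_in1 zB) ?E1 ?aB2.
  have sBe : B2 \subset B :\: e.
    by apply/subsetP => z; rewrite inB2 !inE => /and3P[_ -> ->].
  have sBf : B2 \subset B :\: f.
    by apply/subsetP => z; rewrite inB2 !inE => /and3P[-> _ ->].
  congr Map; last by rewrite !alpeq.
  apply/ffunP => x; rewrite ffunE.
  case xB2: (x \in B2); last first.
    rewrite (@restr_out _ (restr a (B :\: e)) _ _ (negbT xB2)).
    by rewrite !(@restr_out _ _ _ _ (negbT xB2)).
  have xe : x \in B :\: e := subsetP sBe x xB2.
  have xnf : x \notin f by move: xB2; rewrite inB2 => /andP[].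
  rewrite (alpeq _ sBe aBe) ffunE xB2.
  have [j [hj hjA]] := exists_return Winj xB2.
  have [[K hK hKA] _ E3] := restr_compress sBe xB2 (ex_intro _ j (conj hj hjA)).
  have [_ _ E2] := restr_compress sBf xB2 (ex_intro _ j (conj hj hjA)).
  rewrite E2 -E3 (@restr_in _ _ B2 (a x)) ?aB2 // (@restr_in _ _ B2 x) //.
  apply: (restr_shift hK hKA _ _).1.
    rewrite ffunE (@restr_in1 _ a (B :\: e) (a x)) ?aK ?aBe //.
    by apply: hsW => //; rewrite Wnf.
  move=> u uB2; rewrite ffunE.
  case ue: (u \in B :\: e).
    have uf : u \in f.
      by move: uB2 ue; rewrite !inE; case: (u \in f); case: (u \in e); case: (u \in B).
    rewrite (@restr_in1 _ a (B :\: e) u) ?aBe //.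
    by apply: hsW; rewrite ?aBe // Wf.
  rewrite (@restr_out _ a _ _ (negbT ue)) (@restr_out _ s _ _ (negbT ue)).
  by rewrite (@restr_out _ W _ _ (negbT ue)).
Qed.
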